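(* Let $B$ be a finite one-generator skew brace and $x\in B$ such that $B=B(x)$. Then the orbit $X$ of $x$ under the subgroup of $\mathrm{Sym}(B)$ generated by $\{\sigma_a,\delta_a: a\in B\}$ is a transitive cycle base of $B$.
   Context: A skew brace is a triple $(B,+,\circ)$ where $(B,+)$ and $(B,\circ)$ are groups and $a\circ(b+c)=a\circ b-a+a\circ c$; $a^-$ is the inverse in $(B,\circ)$. Put $\lambda_a(b):=-a+a\circ b$, $\delta_a(b):=a\circ b-a$, $\sigma_a:=\lambda_{a^-}$ (so the group generated by $\{\sigma_a,\delta_a\}$ equals that generated by $\{\lambda_a,\delta_a\}$). $B(x)$ is the smallest subset containing $x$ that is a subgroup of both $(B,+)$ and $(B,\circ)$; $B$ is one-generator if $B=B(x)$ for some $x$. A transitive cycle base of $B$ is a subset that is a single orbit of the group generated by $\{\lambda_a,\delta_a:a\in B\}$ and generates $(B,+)$. *)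

(* Defs.v *)
From mathcomp Require Import all_boot all_fingroup.
Set Implicit Arguments. Unset Strict Implicit. Unset Printing Implicit Defensive.

Record skew_brace (B : Type) := SkewBrace {
  sb_add : B -> B -> B;
  sb_opp : B -> B;
  sb_zero : B;
  sb_circ : B -> B -> B;
  sb_cinv : B -> B;
  sb_one : B;
  sb_addA : associative sb_add;
  sb_add0l : left_id sb_zero sb_add;
  sb_add0r : right_id sb_zero sb_add;
  sb_addNl : forall a, sb_add (sb_opp a) a = sb_zero;
  sb_addNr : forall a, sb_add a (sb_opp a) = sb_zero;
  sb_circA : associative sb_circ;
  sb_circ1l : left_id sb_one sb_circ;
  sb_circ1r : right_id sb_one sb_circ;
  sb_circVl : forall a, sb_circ (sb_cinv a) a = sb_one;
  sb_circVr : forall a, sb_circ a (sb_cinv a) = sb_one;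
  sb_brace : forall a b c,
    sb_circ a (sb_add b c) = sb_add (sb_add (sb_circ a b) (sb_opp a)) (sb_circ a c)
}.

Section SkewBraceDefs.
Variables (B : finType) (S : skew_brace B).
Local Notation "a + b" := (sb_add S a b).
Local Notation "- a" := (sb_opp S a).
Local Notation "a \circ b" := (sb_circ S a b) (at level 40).

Definition sb_lambda (a : B) (b : B) : B := - a + (a \circ b).
Definition sb_delta (a : B) (b : B) : B := (a \circ b) + - a.

Lemma sb_addKl a b : - a + (a + b) = b.
Proof. by rewrite (sb_addA S) (sb_addNl S) (sb_add0l S). Qed.

Lemma sb_addKr a b : (b + - a) + a = b.
Proof. by rewrite -(sb_addA S) (sb_addNl S) (sb_add0r S). Qed.

Lemma sb_circKl a b : (sb_cinv S a) \circ (a \circ b) = b.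
Proof. by rewrite (sb_circA S) (sb_circVl S) (sb_circ1l S). Qed.

Lemma sb_lambda_inj a : injective (sb_lambda a).
Proof.
move=> b c /(congr1 (sb_add S a)); rewrite /sb_lambda (sb_addA S) (sb_addNr S) (sb_add0l S).
rewrite (sb_addA S) (sb_addNr S) (sb_add0l S).
by move/(congr1 (sb_circ S (sb_cinv S a))); rewrite !sb_circKl.
Qed.

Lemma sb_delta_inj a : injective (sb_delta a).
Proof.
move=> b c /(congr1 (fun y => y + a)); rewrite /sb_delta !sb_addKr.
by move/(congr1 (sb_circ S (sb_cinv S a))); rewrite !sb_circKl.
Qed.

Definition lambda_perm (a : B) : {perm B} := perm (@sb_lambda_inj a).
Definition delta_perm (a : B) : {perm B} := perm (@sb_delta_inj a).
Definition sigma_perm (a : B) : {perm B} := lambda_perm (sb_cinv S a).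

Definition lambda_delta_set : {set {perm B}} :=
  [set lambda_perm a | a : B] :|: [set delta_perm a | a : B].
Definition sigma_delta_set : {set {perm B}} :=
  [set sigma_perm a | a : B] :|: [set delta_perm a | a : B].

Definition add_subgroup (Y : {set B}) : bool :=
  [&& sb_zero S \in Y,
      [forall a in Y, forall b in Y, a + b \in Y] &
      [forall a in Y, - a \in Y]].
Definition circ_subgroup (Y : {set B}) : bool :=
  [&& sb_one S \in Y,
      [forall a in Y, forall b in Y, a \circ b \in Y] &
      [forall a in Y, sb_cinv S a \in Y]].

Definition sub_brace_gen (x : B) : {set B} :=
  \bigcap_(Y : {set B} | (x \in Y) && add_subgroup Y && circ_subgroup Y) Y.

Definition add_span (X : {set B}) : {set B} :=
  \bigcap_(Y : {set B} | (X \subset Y) && add_subgroup Y) Y.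

Definition transitive_cycle_base (X : {set B}) : Prop :=
  (exists y : B, X = orbit 'P <<lambda_delta_set>> y) /\ add_span X = [set: B].

End SkewBraceDefs.

(* Main.v *)
Require Import Defs.
From mathcomp Require Import all_boot all_fingroup.

Set Implicit Arguments. Unset Strict Implicit. Unset Printing Implicit Defensive.

Section Aux.
Variables (B : finType) (S : skew_brace B).
Local Notation "a + b" := (sb_add S a b).
Local Notation "- a" := (sb_opp S a).
Local Notation "a \circ b" := (sb_circ S a b) (at level 40).

Lemma circ0 a : a \circ sb_zero S = a.
Proof.
have := sb_brace S a (sb_zero S) (sb_zero S).
rewrite (sb_add0l S) => /(congr1 (fun y => - (a \circ sb_zero S) + y)).
rewrite (sb_addNl S) -!(sb_addA S) (sb_addA S (- _)) (sb_addNl S) (sb_add0l S).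
move/(congr1 (fun y => a + y)); rewrite (sb_add0r S) (sb_addA S) (sb_addNr S) (sb_add0l S).
by move<-.
Qed.

Lemma one0 : sb_one S = sb_zero S.
Proof. by rewrite -(circ0 (sb_one S)) (sb_circ1l S). Qed.

Lemma cinvK a : sb_cinv S (sb_cinv S a) = a.
Proof.
rewrite -[LHS](sb_circ1r S) -(sb_circVl S a) (sb_circA S).
by rewrite (sb_circVl S (sb_cinv S a)) (sb_circ1l S).
Qed.

Lemma lambdaD c b d : sb_lambda S c (b + d) = sb_lambda S c b + sb_lambda S c d.
Proof. by rewrite /sb_lambda (sb_brace S) !(sb_addA S). Qed.

Lemma lambda0 c : sb_lambda S c (sb_zero S) = sb_zero S.
Proof. by rewrite /sb_lambda circ0 (sb_addNl S). Qed.

Lemma lambdaN c b : sb_lambda S c (- b) = - sb_lambda S c b.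
Proof.
have := lambdaD c (- b) b; rewrite (sb_addNl S) lambda0.
move/(congr1 (fun y => y + - sb_lambda S c b)).
by rewrite (sb_add0l S) -(sb_addA S) (sb_addNr S) (sb_add0r S) => ->.
Qed.

Lemma add_subgroup_cap (P : pred {set B}) :
  add_subgroup S (\bigcap_(Y : {set B} | P Y && add_subgroup S Y) Y).
Proof.
apply/and3P; split.
- by apply/bigcapP => Y /andP[_ /and3P[]].
- apply/forallP => a; apply/implyP => /bigcapP Ha.
  apply/forallP => b; apply/implyP => /bigcapP Hb.
  apply/bigcapP => Y HY; have := HY; case/andP => _ /and3P[_ /forallP H _].
  by move/implyP: (H a) => /(_ (Ha Y HY)) /forallP /(_ b) /implyP; apply; apply: Hb.
- apply/forallP => a; apply/implyP => /bigcapP Ha.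
  apply/bigcapP => Y HY; have := HY; case/andP => _ /and3P[_ _ /forallP H].
  by move/implyP: (H a); apply; apply: Ha.
Qed.

Lemma sigma_lambda_set :
  [set sigma_perm S a | a : B] = [set lambda_perm S a | a : B].
Proof.
apply/setP => p; apply/imsetP/imsetP => [[a _ ->]|[a _ ->]].
  by exists (sb_cinv S a).
by exists (sb_cinv S a) => //; rewrite /sigma_perm cinvK.
Qed.

End Aux.

Theorem mainTheorem19 (B : finType) (S : skew_brace B) (x : B) :
  sub_brace_gen S x = [set: B] ->
  transitive_cycle_base S (orbit 'P <<sigma_delta_set S>> x).
Proof.
move=> Hgen.
have EG : sigma_delta_set S = lambda_delta_set S.
  by rewrite /sigma_delta_set /lambda_delta_set sigma_lambda_set.
split; first by exists x; rewrite EG.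
set X := orbit _ _ x.
set A := add_span S X.
have AX : X \subset A by apply/subsetP => y Hy; apply/bigcapP => Y /andP[/subsetP H _]; exact: H.
have Aadd : add_subgroup S A by apply: add_subgroup_cap.
have lamX c y : y \in X -> sb_lambda S c y \in X.
  move=> Hy; have -> : sb_lambda S c y = aperm y (lambda_perm S c) by rewrite /aperm permE.
  rewrite /X (orbit_actr (perm_action B)) //.
  apply: mem_gen; rewrite /sigma_delta_set sigma_lambda_set.
  by rewrite inE; apply/orP; left; apply/imsetP; exists c.
have lamA c y : y \in A -> sb_lambda S c y \in A.
  move=> Hy.
  have : A \subset [set z | sb_lambda S c z \in A].
    apply: bigcap_inf; apply/andP; split.
      apply/subsetP => z Hz; rewrite inE; apply: (subsetP AX); exact: lamX.
    case/and3P: Aadd => H0 /forallP HD /forallP HN.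
    apply/and3P; split; first by rewrite inE lambda0.
      apply/forallP => a; apply/implyP; rewrite inE => Ha.
      apply/forallP => b; apply/implyP; rewrite inE => Hb.
      by rewrite inE lambdaD; move/implyP: (HD (sb_lambda S c a)) => /(_ Ha) /forallP /(_ (sb_lambda S c b)) /implyP; apply.
    apply/forallP => a; apply/implyP; rewrite inE => Ha.
    by rewrite inE lambdaN; exact: (implyP (HN _) Ha).
  by move/subsetP/(_ y Hy); rewrite inE.
have Acirc : circ_subgroup S A.
  case/and3P: Aadd => H0 /forallP HD /forallP HN.
  apply/and3P; split; first by rewrite one0.
    apply/forallP => a; apply/implyP => Ha.
    apply/forallP => b; apply/implyP => Hb.
    have -> : sb_circ S a b = sb_add S a (sb_lambda S a b) by rewrite /sb_lambda (sb_addA S) (sb_addNr S) (sb_add0l S).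
    by move/implyP: (HD a) => /(_ Ha) /forallP /(_ (sb_lambda S a b)) /implyP; apply; apply: lamA.
  apply/forallP => a; apply/implyP => Ha.
  have E : sb_lambda S (sb_cinv S a) a = sb_opp S (sb_cinv S a) by rewrite /sb_lambda (sb_circVl S) one0 (sb_add0r S).
  have : sb_opp S (sb_cinv S a) \in A by rewrite -E; apply: lamA.
  move/implyP: (HN (sb_opp S (sb_cinv S a))) => H /H.
  suff -> : sb_opp S (sb_opp S (sb_cinv S a)) = sb_cinv S a by [].
  set u := sb_cinv S a.
  by rewrite -[RHS](sb_add0l S) -(sb_addNl S (sb_opp S u)) -(sb_addA S) (sb_addNl S) (sb_add0r S).
apply/eqP; rewrite eqEsubset subsetT /= -Hgen.
apply: bigcap_inf; rewrite Aadd Acirc !andbT.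
by apply: (subsetP AX); exact: orbit_refl.
Qed.
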